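(* Let $N\geq1$, $\delta=T/N$. Let $v_h^0$ be the greatest $v\in\mathcal W_h$ with $v\leq\phi$, and for $t=0,\delta,\dots,T-\delta$ let $v_h^{t+\delta}$ be the greatest $v\in\mathcal W_h$ with $\langle z_j,v\rangle\leq\langle z_j,S^\delta v_h^t\rangle$ for all $1\leq j\leq q$. Then for every $t\in\{0,\delta,\dots,T\}$ there exists a greatest $\lambda^t\in\overline{\mathbb{R}}^p$ with $v_h^t=W_h\lambda^t$, and these vectors satisfy $\lambda^0=W_h\backslash\phi$ and, for $t=0,\dots,T-\delta$ and $1\leq i\leq p$, \[ \lambda^{t+\delta}_i=\min_{1\leq j\leq q}\Big(\langle z_j,w_i\rangle\backslash\langle z_j,S^\delta(W_h\lambda^t)\rangle\Big). \]
   Context: $X\subseteq\mathbb{R}^n$, $U\subseteq\mathbb{R}^m$, $\ell:X\times U\to\mathbb R$, $f:X\times U\to\mathbb{R}^n$, $T>0$, $\phi:X\to\mathbb{R}\cup\{-\infty\}$; $S^\delta g(x)=\sup\{\int_0^\delta\ell(\mathbf x(s),\mathbf u(s))ds+g(\mathbf x(\delta))\}$ over measurable $\mathbf u:[0,\delta]\to U$ and absolutely continuous $\mathbf x:[0,\delta]\to X$ with $\dot{\mathbf x}=f(\mathbf x,\mathbf u)$ a.e., $\mathbf x(0)=x$. Arithmetic in $\overline{\mathbb R}=\mathbb{R}\cup\{\pm\infty\}$ with $-\infty$ absorbing for $+$; $a\backslash b=\max\{\lambda\in\overline{\mathbb{R}}:a+\lambda\leq b\}$. Finite elements $w_1,\dots,w_p$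 and test functions $z_1,\dots,z_q$ are functions $X\to\mathbb{R}\cup\{-\infty\}$. $\langle u,v\rangle=\sup_{x\in X}(u(x)+v(x))$; $W_h\lambda=\sup_i(w_i+\lambda_i)$; $\mathcal W_h=\{W_h\lambda:\lambda\in\overline{\mathbb R}^p\}$; $(W_h\backslash g)_i=\inf_{x\in X}(w_i(x)\backslash g(x))$. Functions are ordered pointwise. *)

(* Defs.v *)
From HB Require Import structures.
From mathcomp Require Import all_boot all_order all_algebra.
From mathcomp Require Import all_classical all_reals all_analysis.
Set Implicit Arguments. Unset Strict Implicit. Unset Printing Implicit Defensive.
Import Order.TTheory GRing.Theory Num.Theory.
Import numFieldNormedType.Exports.
Local Open Scope classical_set_scope.
Local Open Scope ring_scope.

Section MaxPlus.
Variable R : realType.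
Local Open Scope ereal_scope.

(** residuation  a \ b = max { l in \bar R | a + l <= b }  (with -oo absorbing
    for +, which is mathcomp's convention for +%E) *)
Definition eres (a b : \bar R) : \bar R := ereal_sup [set l | a + l <= b].

Definition epair {T} (X : set T) (u v : T -> \bar R) : \bar R :=
  ereal_sup [set u x + v x | x in X].

Definition Wh {T} p (w : 'I_p -> T -> \bar R) (lam : 'I_p -> \bar R) : T -> \bar R :=
  fun x => \big[maxe/-oo]_(i < p) (w i x + lam i).

Definition Wres {T} (X : set T) p (w : 'I_p -> T -> \bar R) (g : T -> \bar R)
  : 'I_p -> \bar R :=
  fun i => ereal_inf [set eres (w i x) (g x) | x in X].

Definition fle {T} (X : set T) (u v : T -> \bar R) := forall x, X x -> u x <= v x.
Definition feq {T} (X : set T) (u v : T -> \bar R) := forall x, X x -> u x = v x.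

Definition inWh {T} (X : set T) p (w : 'I_p -> T -> \bar R) (v : T -> \bar R) :=
  exists lam : 'I_p -> \bar R, feq X v (Wh w lam).

Definition greatest_fun {T} (X : set T) (A : set (T -> \bar R)) (v : T -> \bar R) :=
  A v /\ forall v', A v' -> fle X v' v.

Definition greatest_vec p (A : set ('I_p -> \bar R)) (lam : 'I_p -> \bar R) :=
  A lam /\ forall l, A l -> forall i, l i <= lam i.

End MaxPlus.

Section Control.
Variables (R : realType) (n m : nat).
Local Open Scope ereal_scope.

Definition abs_cont_on (a b : R) (x : R -> 'rV[R]_n) : Prop :=
  forall e : R, (0 < e)%R -> exists d : R, (0 < d)%R /\
    forall (k : nat) (a' b' : 'I_k -> R),
      (forall i, (a <= a' i)%R /\ (a' i <= b' i)%R /\ (b' i <= b)%R) ->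
      (forall i j, i != j -> (b' i <= a' j)%R \/ (b' j <= a' i)%R) ->
      (\sum_(i < k) (b' i - a' i) < d)%R ->
      (\sum_(i < k) `|x (b' i) - x (a' i)| < e)%R.

Definition admissible (X : set 'rV[R]_n) (U : set 'rV[R]_m)
  (f : 'rV[R]_n -> 'rV[R]_m -> 'rV[R]_n) (delta : R) (x0 : 'rV[R]_n)
  (u : R -> 'rV[R]_m) (x : R -> 'rV[R]_n) : Prop :=
  [/\ (forall j : 'I_m, measurable_fun `[0%R, delta] (fun s => u s ord0 j)),
      (forall s, (0 <= s <= delta)%R -> U (u s)),
      abs_cont_on 0 delta x /\ (forall s, (0 <= s <= delta)%R -> X (x s)),
      {ae (@lebesgue_measure R), forall s, (0 < s < delta)%R ->
          is_derive s 1%R x (f (x s) (u s))}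
    & x 0%R = x0].

Definition Sdelta (X : set 'rV[R]_n) (U : set 'rV[R]_m)
  (l : 'rV[R]_n -> 'rV[R]_m -> R) (f : 'rV[R]_n -> 'rV[R]_m -> 'rV[R]_n)
  (delta : R) (g : 'rV[R]_n -> \bar R) (x0 : 'rV[R]_n) : \bar R :=
  ereal_sup [set J | exists u x, admissible X U f delta x0 u x /\
     J = (\int[@lebesgue_measure R]_(s in `[0%R, delta]) (l (x s) (u s))%:E)
         + g (x delta)].

End Control.

(* Main.v *)
Require Import Defs.
From HB Require Import structures.
From mathcomp Require Import all_boot all_order all_algebra.
From mathcomp Require Import all_classical all_reals all_analysis.
Import Order.TTheory GRing.Theory Num.Theory.
Import numFieldNormedType.Exports.
Local Open Scope classical_set_scope.
Local Open Scope ring_scope.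

Section H.
Variable R : realType.
Local Open Scope ereal_scope.

Lemma eresP (a b l : \bar R) : (a + l <= b) <-> (l <= eres a b).
Proof.
split => H; first by apply: ereal_sup_ubound.
case: a H => [r| |] H.
- have : eres r%:E b <= b - (r%:E).
    by apply: ge_ereal_sup => y hy; rewrite leeBrDl.
  by move=> /(le_trans H); rewrite leeBrDl.
- case: b H => [r| |] H; [|by rewrite leey|].
  + have : eres +oo r%:E <= -oo.
      by apply: ge_ereal_sup => y /=; case: y.
    move=> /(le_trans H); rewrite leeNy_eq => /eqP ->.
    by rewrite addeNy leNye.
  + have : @eres R +oo (-oo) <= -oo.
      by apply: ge_ereal_sup => y /=; case: y.
    move=> /(le_trans H); rewrite leeNy_eq => /eqP ->.
    by rewrite addeNy leNye.
- by rewrite addNye leNye.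
Qed.

Lemma Wh_le {T} p (w : 'I_p -> T -> \bar R) lam x c :
  (Wh w lam x <= c) <-> (forall i, w i x + lam i <= c).
Proof.
rewrite /Wh; split.
- by move=> H i; apply: le_trans H; rewrite (bigD1 i) //= le_max lexx.
- move=> H; apply: (big_ind (fun y => y <= c)) => //; first exact: leNye.
  by move=> a b ha hb; rewrite ge_max ha hb.
Qed.

Lemma Wh_addl {T} p (w : 'I_p -> T -> \bar R) lam x a c :
  (forall i, a + (w i x + lam i) <= c) -> a + Wh w lam x <= c.
Proof.
move=> H; apply: (big_ind (fun y => a + y <= c)) => //.
- by rewrite addeNy leNye.
- by move=> y1 y2 h1 h2; rewrite maxEle; case: ifP.
Qed.

Lemma epair_ge {T} (X : set T) (u v : T -> \bar R) x : X x -> u x + v x <= epair X u v.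
Proof. by move=> hx; apply: ereal_sup_ubound; exists x. Qed.

Lemma epair_le {T} (X : set T) (u v : T -> \bar R) c :
  (forall x, X x -> u x + v x <= c) -> epair X u v <= c.
Proof. by move=> H; apply: ge_ereal_sup => y [x hx <-]; exact: H. Qed.

Lemma Wres_ge {T} (X : set T) p (w : 'I_p -> T -> \bar R) g lam :
  (forall i, lam i <= Wres X w g i) <-> fle X (Wh w lam) g.
Proof.
split.
- move=> H x hx; apply/Wh_le => i; rewrite eresP; apply: le_trans (H i) _.
  by apply: ereal_inf_lbound; exists x.
- move=> H i; apply: le_ereal_inf_tmp => y [x hx <-]; apply/eresP.
  by move/Wh_le: (H x hx); apply.
Qed.

Lemma Wres_greatest {T} (X : set T) p (w : 'I_p -> T -> \bar R) u :
  inWh X w u -> greatest_vec [set lm | feq X u (Wh w lm)] (Wres X w u).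
Proof.
case=> mu hmu.
have hle : fle X (Wh w (Wres X w u)) u by apply/Wres_ge.
have hmu_le : forall i, mu i <= Wres X w u i.
  by apply/Wres_ge => x hx; rewrite -hmu.
split.
- move=> x hx; apply/le_anti/andP; split; last exact: hle.
  rewrite hmu //; apply/Wh_le => i; apply: le_trans (leeD2l _ (hmu_le i)) _.
  by move/Wh_le: (lexx (Wh w (Wres X w u) x)); apply.
- by move=> l hl; apply/Wres_ge => x hx; rewrite -hl.
Qed.
End H.
Theorem proposition3p2 (R : realType) (n m : nat)
  (X : set 'rV[R]_n) (U : set 'rV[R]_m)
  (l : 'rV[R]_n -> 'rV[R]_m -> R) (f : 'rV[R]_n -> 'rV[R]_m -> 'rV[R]_n)
  (T : R) (hT : 0 < T) (phi : 'rV[R]_n -> \bar R)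
  (hphi : forall x, X x -> phi x != +oo%E)
  (p q : nat) (w : 'I_p -> 'rV[R]_n -> \bar R) (z : 'I_q -> 'rV[R]_n -> \bar R)
  (hw : forall i x, X x -> w i x != +oo%E)
  (hz : forall j x, X x -> z j x != +oo%E)
  (N : nat) (hN : (1 <= N)%N)
  (v : nat -> 'rV[R]_n -> \bar R)
  (hv0 : greatest_fun X [set u | inWh X w u /\ fle X u phi] (v 0%N))
  (hvS : forall k, (k < N)%N ->
     greatest_fun X
       [set u | inWh X w u /\ forall j : 'I_q,
          (epair X (z j) u <= epair X (z j) (Sdelta X U l f (T / N%:R) (v k)))%E]
       (v k.+1)) :
  exists lam : nat -> 'I_p -> \bar R,
    [/\ (forall k, (k <= N)%N ->
           greatest_vec [set lm | feq X (v k) (Wh w lm)] (lam k)),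
        lam 0%N = Wres X w phi
      & forall k, (k < N)%N -> forall i : 'I_p,
          lam k.+1 i =
          \big[mine/+oo%E]_(j < q)
             eres (epair X (z j) (w i))
                  (epair X (z j) (Sdelta X U l f (T / N%:R) (Wh w (lam k))))].

Proof.
have hd : (0 <= T / N%:R)%R by rewrite divr_ge0 // ltW.
have inW : forall k, (k <= N)%N -> inWh X w (v k).
  by case=> [|k] hk; [exact: (proj1 (proj1 hv0)) | exact: (proj1 (proj1 (hvS k hk)))].
exists (fun k => Wres X w (v k)).
have hG : forall k, (k <= N)%N ->
    greatest_vec [set lm | feq X (v k) (Wh w lm)] (Wres X w (v k)).
  by move=> k hk; apply: Wres_greatest; exact: inW.
split => //.
- apply: funext => i; apply/le_anti/andP; split; move: i.
  + apply/Wres_ge => x hx; rewrite -(proj1 (hG 0%N erefl) x hx).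
    exact: (proj2 (proj1 hv0)) x hx.
  + apply/Wres_ge; apply: (proj2 hv0); split.
      by exists (Wres X w phi).
    by apply/Wres_ge => i.
- move=> k hk i.
  have hk' : (k <= N)%N := ltnW hk.
  have hfe := proj1 (hG k hk').
  have hS : Sdelta X U l f (T / N%:R) (v k) =
            Sdelta X U l f (T / N%:R) (Wh w (Wres X w (v k))).
    apply: funext => x0; rewrite /Sdelta; congr ereal_sup; apply: funext => J.
    apply: propext; split; case=> u [x [hadm ->]]; exists u, x; split => //;
      (have hXd : X (x (T / N%:R)) by case: hadm => _ _ [_ hX] _ _; apply: hX; rewrite lexx andbT);
      by rewrite hfe.
  have [hA hmax] := hvS k hk.
  rewrite hS in hA hmax.
  set mu := fun i => \big[mine/+oo%E]_(j < q)
             eres (epair X (z j) (w i))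
                  (epair X (z j) (Sdelta X U l f (T / N%:R) (Wh w (Wres X w (v k))))).
  have mu_le : forall i j, (mu i <= eres (epair X (z j) (w i))
                  (epair X (z j) (Sdelta X U l f (T / N%:R) (Wh w (Wres X w (v k))))))%E.
    by move=> i' j; rewrite /mu (bigD1 j) //= ge_min lexx.
  have h1 : forall i, (mu i <= Wres X w (v k.+1) i)%E.
    apply/Wres_ge; apply: hmax; split; first by exists mu.
    move=> j; apply: epair_le => x hx; apply: Wh_addl => i'; rewrite addeA.
    apply: (@le_trans _ _ (epair X (z j) (w i') + mu i')%E).
      by apply: leeD2r; apply: epair_ge.
    apply/eresP; exact: mu_le.
  apply/le_anti/andP; split; last exact: h1.
  apply: (big_ind (fun y => Wres X w (v k.+1) i <= y)%E).
  - exact: leey.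
  - by move=> a b ha hb; rewrite le_min ha hb.
  move=> j _; apply/eresP; rewrite addeC; apply/eresP; apply: epair_le => x hx.
  apply/(@eresP R (Wres X w (v k.+1) i) _ (z j x + w i x)%E); rewrite addeC -addeA.
  have hwx : (w i x + Wres X w (v k.+1) i <= v k.+1 x)%E.
    rewrite (proj1 (hG k.+1 hk) x hx).
    by move/Wh_le: (lexx (Wh w (Wres X w (v k.+1)) x)); apply.
  apply: (@le_trans _ _ (z j x + v k.+1 x)%E); first exact: leeD2l.
  apply: (@le_trans _ _ (epair X (z j) (v k.+1))); first exact: epair_ge.
  exact: (proj2 hA) j.
Qed.
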